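(* Let $n$ be even. For $i=1,2$ let $E_i=\{e^{(i)}_0,\dots,e^{(i)}_{2^{\lambda_i}-1}\}\subset\mathbb F_2^n$ be a linear subspace of dimension $\lambda_i$, listed in lexicographic order (so $e^{(i)}_0=\mathbf 0_n$), let $v_i\in\mathbb F_2^n$, and let $S^{[i]}=v_i\oplus E_i=\{\omega^{(i)}_j=v_i\oplus e^{(i)}_j\}$, where $S^{[1]}\cap S^{[2]}=\emptyset$ and $2^{\lambda_1}+2^{\lambda_2}<2^n$. Let $f^*_{[i]}:S^{[i]}\to\mathbb F_2$, and regard $f^*_{[i]}$ also as a function on $\mathbb F_2^{\lambda_i}$ via $f^*_{[i]}(x_j):=f^*_{[i]}(\omega^{(i)}_j)$, where $\mathbb F_2^{\lambda_i}=\{x_0,\dots,x_{2^{\lambda_i}-1}\}$ is in lexicographic order. Suppose that, as functions on $\mathbb F_2^{\lambda_i}$, $f^*_{[i]}$ is $s_i$-plateaued ($i=1,2$), and that $f^*_{[1]},f^*_{[2]}$ are totally disjoint spectra functions (as functions on $S^{[1]},S^{[2]}$). Define $W:\mathbb F_2^n\to\mathbb Z$ by $W(u)=0$ for $u\notin S^{[1]}\cup S^{[2]}$, $W(u)=(-1)^{f^*_{[1]}(u)}2^{(n+2)/2}$ for $u\in S^{[1]}$, $W(u)=(-1)^{f^*_{[2]}(u)}2^{n/2}$ for $u\in S^{[2]}$. Then $W$ is the Walsh spectrum of a Boolean function $f:\mathbb F_2^n\to\mathbb F_2$ (which then has $W_f(u)\in\{0,\pm2^{n/2},\pm2^{(n+2)/2}\}$)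 if and only if $\lambda_1+s_1+2=\lambda_2+s_2=n$.
   Context: $W_f(\omega)=\sum_{x}(-1)^{f(x)\oplus\omega\cdot x}$. A function $g:\mathbb F_2^\lambda\to\mathbb F_2$ is $s$-plateaued if $W_g(\omega)\in\{0,\pm2^{(\lambda+s)/2}\}$ for all $\omega$. Lexicographic order: $e$ precedes $e'$ iff the integer with binary expansion $e$ (first coordinate most significant) is smaller. Totally disjoint spectra functions: for disjoint $S^{[1]},S^{[2]}\subset\mathbb F_2^n$ and functions $f^*_{[i]}:S^{[i]}\to\mathbb F_2$, put $X_i(u)=\sum_{\omega\in S^{[i]}}(-1)^{f^*_{[i]}(\omega)\oplus u\cdot\omega}$; the pair is totally disjoint spectra if $X_1(u)X_2(u)=0$ and $|X_1(u)|+|X_2(u)|>0$ for all $u\in\mathbb F_2^n$. *)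

(* Defs.v *)
From HB Require Import structures.
From mathcomp Require Import all_boot all_order all_algebra.
Set Implicit Arguments. Unset Strict Implicit. Unset Printing Implicit Defensive.
Import Order.TTheory GRing.Theory Num.Theory.
Local Open Scope ring_scope.

Notation vecF2 n := 'rV['F_2]_n.

Definition sgnF2 (a : 'F_2) : int := (-1) ^+ (a == 1).

Definition dotF2 n (w x : vecF2 n) : 'F_2 := \sum_(i < n) w 0 i * x 0 i.

Definition walsh n (f : vecF2 n -> 'F_2) (w : vecF2 n) : int :=
  \sum_(x : vecF2 n) sgnF2 (f x + dotF2 w x).

(* g is s-plateaued on F_2^lam : W_g(w) in {0, +-2^((lam+s)/2)} for all w.
   (lam+s must be even for 2^((lam+s)/2) to be an integer; if it is odd the
   literal condition forces W_g = 0 everywhere, impossible by Parseval.) *)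
Definition plateaued lam (s : nat) (g : vecF2 lam -> 'F_2) : Prop :=
  ~~ odd (lam + s) /\
  forall w, walsh g w \in [:: 0; (2 ^+ ((lam + s)./2))%:~R; - (2 ^+ ((lam + s)./2))%:~R]%R.

Definition lexrank n (e : vecF2 n) : nat :=
  \sum_(i < n) (nat_of_bool (e ord0 i == 1%R) * 2 ^ (n.-1 - i))%N.

Definition lexlist n (E : {vspace vecF2 n}) : seq (vecF2 n) :=
  sort (fun a b => (lexrank a <= lexrank b)%N)
       [seq x <- enum [set: vecF2 n] | x \in E].

Definition inCoset n (v : vecF2 n) (E : {vspace vecF2 n}) (u : vecF2 n) : bool :=
  (u - v) \in E.

(* f* on S = v (+) E regarded as a function on F_2^lam:
   x_j |-> f*(v + e_j), with x_j, e_j the j-th elements in lexicographic order *)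
Definition pullback n lam (v : vecF2 n) (E : {vspace vecF2 n})
    (f : vecF2 n -> 'F_2) : vecF2 lam -> 'F_2 :=
  fun x => f (v + nth 0 (lexlist E) (lexrank x)).

Definition Xsum n (v : vecF2 n) (E : {vspace vecF2 n}) (f : vecF2 n -> 'F_2)
    (u : vecF2 n) : int :=
  \sum_(w : vecF2 n | inCoset v E w) sgnF2 (f w + dotF2 u w).

Definition totally_disjoint_spectra n (v1 v2 : vecF2 n) (E1 E2 : {vspace vecF2 n})
    (f1 f2 : vecF2 n -> 'F_2) : Prop :=
  forall u, Xsum v1 E1 f1 u * Xsum v2 E2 f2 u = 0 /\
            0 < `|Xsum v1 E1 f1 u| + `|Xsum v2 E2 f2 u|.

Definition Wspec n (v1 v2 : vecF2 n) (E1 E2 : {vspace vecF2 n})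
    (f1 f2 : vecF2 n -> 'F_2) (u : vecF2 n) : int :=
  if inCoset v1 E1 u then sgnF2 (f1 u) * (2 ^+ (n./2 + 1))%:~R
  else if inCoset v2 E2 u then sgnF2 (f2 u) * (2 ^+ n./2)%:~R
  else 0.

Arguments pullback {n} lam v E f x.

(* Main.v *)
Require Import Defs.
From HB Require Import structures.
From mathcomp Require Import all_boot all_order all_algebra all_field zify.
Import Order.TTheory GRing.Theory Num.Theory.
Set Implicit Arguments. Unset Strict Implicit. Unset Printing Implicit Defensive.
Local Open Scope ring_scope.

Definition rk (n : nat) (b : nat -> bool) : nat :=
  (\sum_(i < n) (b i * 2 ^ (n.-1 - i)))%N.

Lemma rkS n b : rk n.+1 b = (2 * rk n b + b n)%N.
Proof.
rewrite /rk big_ord_recr /= subnn expn0 muln1; congr (_ + _)%N.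
rewrite big_distrr /=; apply: eq_bigr => i _.
have Hi := ltn_ord i.
have -> : (n - i = (n.-1 - i).+1)%N by lia.
by rewrite expnS; lia.
Qed.

Lemma rk_lt n b : (rk n b < 2 ^ n)%N.
Proof.
elim: n => [|n IH]; first by rewrite /rk big_ord0.
rewrite rkS expnS; case: (b n) => /=; lia.
Qed.

Lemma rk_eq n b c : (forall j, (j < n)%N -> b j = c j) -> rk n b = rk n c.
Proof. by move=> H; apply: eq_bigr => i _; rewrite H. Qed.

Lemma rk_ltP n b c i : (i < n)%N -> (forall j, (j < i)%N -> b j = c j) ->
  b i = false -> c i = true -> (rk n b < rk n c)%N.
Proof.
elim: n => [//|n IH] Hin Hpre Hb Hc.
rewrite !rkS.
case: (ltngtP i n) => [Hlt|Hgt|Heq].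
- have := IH Hlt Hpre Hb Hc; case: (b n); case: (c n) => /=; lia.
- lia.
- subst i. rewrite (@rk_eq n b c) ?Hb ?Hc /=; first lia.
  move=> j Hj; exact: Hpre.
Qed.

Lemma F2_cases (a : 'F_2) : a = 0 \/ a = 1.
Proof. case: a => [[|[|m]] Hm]; [left|right|by []]; exact: val_inj. Qed.

Lemma F2_neq (a b : 'F_2) : a != b -> (a = 0 /\ b = 1) \/ (a = 1 /\ b = 0).
Proof. by case: (F2_cases a) => ->; case: (F2_cases b) => ->; auto. Qed.

Definition bit n (e : vecF2 n) (i : nat) : bool :=
  [exists j : 'I_n, (val j == i) && (e ord0 j == 1)].

Lemma bitE n (e : vecF2 n) (j : 'I_n) : bit e j = (e ord0 j == 1).
Proof.
apply/existsP/idP => [[k /andP[/eqP Hk He]]|He]; last by exists j; rewrite eqxx.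
by have -> : j = k by apply: val_inj.
Qed.

Lemma lexrankE n (e : vecF2 n) : lexrank e = rk n (bit e).
Proof. by apply: eq_bigr => i _; rewrite bitE. Qed.

Lemma lexrank_bound n (e : vecF2 n) : (lexrank e < 2 ^ n)%N.
Proof. by rewrite lexrankE rk_lt. Qed.

Lemma lexrank_lt n (e e' : vecF2 n) (i : 'I_n) :
  (forall j : 'I_n, (j < i)%N -> e ord0 j = e' ord0 j) ->
  e ord0 i = 0 -> e' ord0 i = 1 -> (lexrank e < lexrank e')%N.
Proof.
move=> Hpre He He'; rewrite !lexrankE; apply: (@rk_ltP _ _ _ i) => //.
- move=> j Hj; have Hjn : (j < n)%N by apply: ltn_trans Hj (ltn_ord i).
  by rewrite -[j]/(val (Ordinal Hjn)) !bitE Hpre.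
- by rewrite bitE He.
- by rewrite bitE He'.
Qed.

Lemma firstdiff n (e e' : vecF2 n) : e != e' ->
  exists i : 'I_n, (forall j : 'I_n, (j < i)%N -> e ord0 j = e' ord0 j) /\
                   e ord0 i != e' ord0 i.
Proof.
move=> Hne.
have [i0 Hi0] : exists i0 : 'I_n, e ord0 i0 != e' ord0 i0.
  apply/existsP; apply: contraR Hne; rewrite negb_exists => /forallP H.
  by apply/eqP/rowP => j; apply/eqP; move: (H j); rewrite negbK.
have [i Hi Hmin] := @arg_minnP _ i0 (fun i : 'I_n => e ord0 i != e' ord0 i) val Hi0.
exists i; split => // j Hj; apply/eqP; apply: contraTT Hj => Hj.
by rewrite -leqNgt; apply: Hmin.
Qed.

Lemma lexrank_inj n : injective (@lexrank n).
Proof.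
move=> e e' Heq; apply/eqP; apply/negPn/negP => Hne.
have [i [Hpre Hi]] := firstdiff Hne.
case: (F2_neq Hi) => [[H1 H2]|[H1 H2]].
- by have := lexrank_lt Hpre H1 H2; rewrite Heq ltnn.
- have Hpre' : forall j : 'I_n, (j < i)%N -> e' ord0 j = e ord0 j.
    by move=> j Hj; rewrite Hpre.
  by have := lexrank_lt Hpre' H2 H1; rewrite Heq ltnn.
Qed.

Lemma lexrank_ltE n (e e' : vecF2 n) : (lexrank e < lexrank e')%N ->
  exists i : 'I_n, [/\ (forall j : 'I_n, (j < i)%N -> e ord0 j = e' ord0 j),
                   e ord0 i = 0 & e' ord0 i = 1].
Proof.
move=> Hlt.
have Hne : e != e' by apply: contraTneq Hlt => ->; rewrite ltnn.
have [i [Hpre Hi]] := firstdiff Hne.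
case: (F2_neq Hi) => [[H1 H2]|[H1 H2]]; first by exists i.
have Hpre' : forall j : 'I_n, (j < i)%N -> e' ord0 j = e ord0 j.
  by move=> j Hj; rewrite Hpre.
by have := lexrank_lt Hpre' H2 H1; rewrite ltnNge (ltnW Hlt).
Qed.

Definition leR n : rel (vecF2 n) := fun a b => (lexrank a <= lexrank b)%N.
Definition ltR n : rel (vecF2 n) := fun a b => (lexrank a < lexrank b)%N.

Definition sl n (G : {set vecF2 n}) : seq (vecF2 n) :=
  sort (@leR n) [seq x <- enum [set: vecF2 n] | x \in G].

Lemma sl_mem n (G : {set vecF2 n}) x : (x \in sl G) = (x \in G).
Proof. by rewrite mem_sort mem_filter mem_enum in_setT andbT. Qed.

Lemma sl_uniq n (G : {set vecF2 n}) : uniq (sl G).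
Proof.
by rewrite /sl sort_uniq filter_uniq // enum_uniq.
Qed.

Lemma sl_size n (G : {set vecF2 n}) : size (sl G) = #|G|.
Proof.
have /card_uniqP <- := sl_uniq G.
by apply: eq_card => x; rewrite sl_mem.
Qed.

Lemma sl_sorted n (G : {set vecF2 n}) : sorted (@ltR n) (sl G).
Proof.
have Hs : sorted (@leR n) (sl G) by apply: sort_sorted => a b; exact: leq_total.
have Hu := sl_uniq G.
have Htr : transitive (@leR n) by move=> a b c; exact: leq_trans.
have Htr' : transitive (@ltR n) by move=> a b c; exact: ltn_trans.
rewrite sorted_pairwise // in Hs; rewrite sorted_pairwise //.
elim: (sl G) Hs Hu => //= x s IH /andP[Hx Hs] /andP[Hxs Hu].
rewrite IH // andbT; apply/allP => y Hy.
have /allP/(_ y Hy) := Hx; rewrite /leR /ltR leq_eqVlt => /orP[/eqP H|//].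
by move: Hxs; rewrite (lexrank_inj H) Hy.
Qed.

Lemma sl_unique n (G : {set vecF2 n}) s :
  sorted (@ltR n) s -> s =i G -> s = sl G.
Proof.
move=> Hs Hm; apply: (@irr_sorted_eq _ (@ltR n)).
- by move=> a b c; exact: ltn_trans.
- by move=> a; exact: ltnn.
- exact: Hs.
- exact: sl_sorted.
- by move=> x; rewrite Hm sl_mem.
Qed.

Lemma addvv n (a : vecF2 n) : a + a = 0.
Proof.
apply/rowP => j; rewrite !mxE.
by case: (F2_cases (a 0 j)) => ->; [rewrite addr0 | exact: val_inj].
Qed.

Definition tl k (y : vecF2 k.+1) : vecF2 k := \row_i y ord0 (lift ord0 i).

Lemma lexrank_tl k (y : vecF2 k.+1) :
  lexrank y = ((y ord0 ord0 == 1%R) * 2 ^ k + lexrank (tl y))%N.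
Proof.
rewrite /lexrank big_ord_recl /= subn0; congr (_ + _)%N.
apply: eq_bigr => i _; rewrite mxE; congr (_ * 2 ^ _)%N.
by rewrite /bump /= add1n; lia.
Qed.

Definition grp n (G : {set vecF2 n}) :=
  0 \in G /\ forall x y, x \in G -> y \in G -> x + y \in G.

Definition Phi n (G : {set vecF2 n}) (j : nat) := nth 0 (sl G) j.

Lemma tlD k (y z : vecF2 k.+1) : tl (y + z) = tl y + tl z.
Proof. by apply/rowP => i; rewrite !mxE. Qed.

Lemma Phi_mem n (G : {set vecF2 n}) j : (j < #|G|)%N -> Phi G j \in G.
Proof. by move=> Hj; rewrite -sl_mem mem_nth // sl_size. Qed.

Lemma sl_add k : forall n (G : {set vecF2 n}), grp G -> #|G| = (2 ^ k)%N ->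
  forall y z : vecF2 k,
  Phi G (lexrank (y + z)) = Phi G (lexrank y) + Phi G (lexrank z).
Proof.
elim: k => [|k IH] n G [G0 GD] HG.
  move=> y z; have H0 : forall w : vecF2 0, lexrank w = 0%N.
    by move=> w; rewrite /lexrank big_ord0.
  rewrite !H0.
  have : #|G| == 1%N by rewrite HG.
  case/cards1P => x Gx.
  have Hm : Phi G 0 \in G by apply: Phi_mem; rewrite HG.
  move: Hm G0; rewrite Gx !inE => /eqP -> /eqP <-; by rewrite addr0.
have [g0 /andP[Hg0 Hg0nz]] : exists g0, (g0 \in G) && (g0 != 0).
  apply/existsP; apply: contraT; rewrite negb_exists => /forallP Hall.
  have : (#|G| <= 1)%N.
    apply: (@leq_trans #|[set (0 : vecF2 n)]|); last by rewrite cards1.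
    apply: subset_leq_card; apply/subsetP => x Hx.
    by move: (Hall x); rewrite Hx /= negbK inE.
  by rewrite HG expnS; have := expn_gt0 2 k; lia.
have [i0 Hi0] : exists i0 : 'I_n, [exists g in G, g ord0 i0 == 1].
  have [i [_ Hi]] := firstdiff Hg0nz.
  exists i; apply/existsP; exists g0; rewrite Hg0 /=.
  by move: Hi; rewrite mxE; case: (F2_cases (g0 ord0 i)) => ->.
have [p Hp Hpmin] := @arg_minnP _ i0 (fun i : 'I_n => [exists g in G, g ord0 i == 1]) val Hi0.
have P1 : forall g, g \in G -> forall j : 'I_n, (j < p)%N -> g ord0 j = 0.
  move=> g Hg j Hj; case: (F2_cases (g ord0 j)) => // Hgj.
  have : (p <= j)%N by apply: Hpmin; apply/existsP; exists g; rewrite Hg Hgj eqxx.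
  by rewrite leqNgt Hj.
have [g1 Hg1] : exists g1, (g1 \in G) && (g1 ord0 p == 1) by apply/existsP.
move/andP: Hg1 => [Hg1 /eqP Hg1p].
set Z := [set g : vecF2 n | g ord0 p == 0].
set H := G :&: Z.
set K := G :\: Z.
have inH : forall g, (g \in H) = (g \in G) && (g ord0 p == 0).
  by move=> g; rewrite !inE andbC.
have inK : forall g, (g \in K) = (g \in G) && (g ord0 p == 1).
  move=> g; rewrite !inE andbC; congr (_ && _).
  by case: (F2_cases (g ord0 p)) => ->.
have cardHK : #|H| = #|K|.
  apply/eqP; rewrite eqn_leq; apply/andP; split.
  - rewrite -(card_imset H (addrI g1)); apply: subset_leq_card; apply/subsetP.
    move=> x /imsetP[h Hh ->]; move: Hh; rewrite inH inK => /andP[HhG /eqP Hhp].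
    by rewrite GD //= mxE Hg1p Hhp addr0.
  - rewrite -(card_imset K (addrI g1)); apply: subset_leq_card; apply/subsetP.
    move=> x /imsetP[h Hh ->]; move: Hh; rewrite inH inK => /andP[HhG /eqP Hhp].
    by rewrite GD //= mxE Hg1p Hhp; apply/eqP; apply: val_inj.
have cardH : #|H| = (2 ^ k)%N.
  have HH := cardsID Z G; rewrite -/H -/K -cardHK HG expnS in HH.
  have -> : #|H| = (#|H| + #|H|)./2 by rewrite addnn doubleK.
  by rewrite HH mul2n doubleK.
have grpH : grp H.
  split; first by rewrite inH G0 mxE.
  move=> x y; rewrite !inH => /andP[Hx /eqP Hxp] /andP[Hy /eqP Hyp].
  by rewrite GD //= mxE Hxp Hyp addr0.
have Hg1K : g1 \in K by rewrite inK Hg1 Hg1p eqxx.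
have [a Ha Hamin] := @arg_minnP _ g1 (fun g => g \in K) (@lexrank n) Hg1K.
move: (Ha); rewrite inK => /andP[HaG /eqP Hap].
have Q1 : forall h g, h \in H -> g \in K -> (lexrank h < lexrank g)%N.
  move=> h g; rewrite inH inK => /andP[Hh /eqP Hhp] /andP[Hg /eqP Hgp].
  apply: (@lexrank_lt _ _ _ p) => // j Hj.
  by rewrite (P1 _ Hh _ Hj) (P1 _ Hg _ Hj).
have Q2 : forall h h', h \in H -> h' \in H -> (lexrank h < lexrank h')%N ->
    (lexrank (a + h) < lexrank (a + h'))%N.
  move=> h h' Hh Hh' Hlt.
  have [i [Hpre Hhi Hh'i]] := lexrank_ltE Hlt.
  case: (F2_cases (a ord0 i)) => Hai.
    apply: (@lexrank_lt _ _ _ i).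
    - by move=> j Hj; rewrite !mxE Hpre.
    - by rewrite !mxE Hai Hhi addr0.
    - by rewrite !mxE Hai Hh'i add0r.
  exfalso.
  move: Hh Hh'; rewrite !inH => /andP[HhG /eqP Hhp] /andP[Hh'G /eqP Hh'p].
  have Ha'K : a + h + h' \in K.
    by rewrite inK !GD //= !mxE Hap Hhp Hh'p !addr0.
  have := Hamin _ Ha'K.
  have Hlt' : (lexrank (a + h + h') < lexrank a)%N.
    apply: (@lexrank_lt _ _ _ i).
    - move=> j Hj; rewrite !mxE (Hpre _ Hj) -addrA.
      have -> : forall c : 'F_2, c + c = 0.
        by move=> c; case: (F2_cases c) => ->; [rewrite addr0 | exact: val_inj].
      by rewrite addr0.
    - by rewrite !mxE Hai Hhi Hh'i addr0; exact: val_inj.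
    - by [].
  by rewrite leqNgt Hlt'.
have Hsl : sl H ++ map (fun h => a + h) (sl H) = sl G.
  apply: sl_unique.
  - have Htr : transitive (@ltR n) by move=> x y w; exact: ltn_trans.
    rewrite sorted_pairwise // pairwise_cat; apply/and3P; split.
    + apply/allrelP => x y; rewrite sl_mem => Hx /mapP[h]; rewrite sl_mem => Hh ->.
      apply: Q1 => //; move: Hh; rewrite !inH inK => /andP[HhG /eqP Hhp].
      by rewrite GD //= mxE Hap Hhp addr0.
    + by rewrite -sorted_pairwise // sl_sorted.
    + rewrite pairwise_map.
      have := sl_sorted H; rewrite sorted_pairwise // => Hpw.
      apply: (@sub_in_pairwise _ (fun x => x \in H) (@ltR n) _ _ _ _ Hpw).
      * by move=> x y Hx Hy; exact: Q2.
      * by apply/allP => x; rewrite sl_mem.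
  - move=> x; rewrite mem_cat sl_mem; apply/orP/idP => [[Hx|/mapP[h]]|Hx].
    + by move: Hx; rewrite inH => /andP[].
    + rewrite sl_mem inH => /andP[Hh _] ->; exact: GD.
    + case: (F2_cases (x ord0 p)) => Hxp; [left | right].
      * by rewrite inH Hx Hxp eqxx.
      * apply/mapP; exists (a + x); last by rewrite addrA addvv add0r.
        by rewrite sl_mem inH GD //= mxE Hap Hxp; apply/eqP; exact: val_inj.
have HPhi : forall y : vecF2 k.+1, Phi G (lexrank y) =
    (if y ord0 ord0 == 1 then a + Phi H (lexrank (tl y)) else Phi H (lexrank (tl y))).
  move=> y; rewrite /Phi -Hsl lexrank_tl nth_cat sl_size cardH.
  have Hb := lexrank_bound (tl y).
  case: (y ord0 ord0 == 1) => /=.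
  - rewrite mul1n ltnNge leq_addr /= addKn (nth_map 0) //.
    by rewrite sl_size cardH.
  - by rewrite mul0n add0n Hb.
move=> y z; rewrite !HPhi tlD (IH _ H grpH cardH) mxE.
case: (F2_cases (y ord0 ord0)) => ->; case: (F2_cases (z ord0 ord0)) => -> /=.
- by [].
- by rewrite addrCA.
- by rewrite addrA.
- by rewrite addrACA addvv add0r.
Qed.

Lemma sgnF2D a b : sgnF2 (a + b) = sgnF2 a * sgnF2 b.
Proof. by case: (F2_cases a) => ->; case: (F2_cases b) => ->. Qed.

Lemma card_vs n (E : {vspace vecF2 n}) : #|E| = (2 ^ \dim E)%N.
Proof. by rewrite card_vspace card_Fp. Qed.

Lemma dotF2D n (u a b : vecF2 n) : dotF2 u (a + b) = dotF2 u a + dotF2 u b.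
Proof. by rewrite /dotF2 -big_split /=; apply: eq_bigr => i _; rewrite mxE mulrDr. Qed.

Lemma dotF2C n (u a : vecF2 n) : dotF2 u a = dotF2 a u.
Proof. by apply: eq_bigr => i _; rewrite mulrC. Qed.

Lemma dotF2Dl n (u a b : vecF2 n) : dotF2 (a + b) u = dotF2 a u + dotF2 b u.
Proof. by rewrite !(dotF2C _ u) dotF2D. Qed.

Section Lin.
Variables (n : nat) (E : {vspace vecF2 n}).
Let GE := [set x : vecF2 n | x \in E].
Let phi (y : vecF2 (\dim E)) := Phi GE (lexrank y).

Lemma GE_grp : grp GE.
Proof.
split; first by rewrite inE mem0v.
by move=> x y; rewrite !inE; exact: memvD.
Qed.

Lemma GE_card : #|GE| = (2 ^ \dim E)%N.
Proof. by rewrite cardsE card_vs. Qed.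

Lemma phiD y z : phi (y + z) = phi y + phi z.
Proof. exact: (sl_add GE_grp GE_card). Qed.

Lemma phi_mem y : phi y \in E.
Proof.
have := @Phi_mem _ GE (lexrank y); rewrite inE; apply.
by rewrite GE_card lexrank_bound.
Qed.

Lemma phi_inj : injective phi.
Proof.
move=> y z; rewrite /phi /Phi => /eqP.
rewrite nth_uniq ?sl_uniq ?sl_size ?GE_card ?lexrank_bound // => /eqP.
exact: lexrank_inj.
Qed.

Lemma phi_img : phi @: setT = GE.
Proof.
apply/eqP; rewrite eqEcard; apply/andP; split.
  by apply/subsetP => x /imsetP[y _ ->]; rewrite inE phi_mem.
by rewrite card_imset; [rewrite cardsT card_mx card_Fp // mul1n GE_card | exact: phi_inj].
Qed.

Lemma lexlist_sl : lexlist E = sl GE.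
Proof. by rewrite /lexlist /sl; congr sort; apply: eq_filter => x; rewrite inE. Qed.

End Lin.

Lemma dotF2Z n (u a : vecF2 n) c : dotF2 u (c *: a) = c * dotF2 u a.
Proof. by rewrite /dotF2 mulr_sumr; apply: eq_bigr => i _; rewrite mxE mulrCA. Qed.

Lemma dotF20 n (u : vecF2 n) : dotF2 u 0 = 0.
Proof. by rewrite /dotF2 big1 // => i _; rewrite mxE mulr0. Qed.

Lemma Xsum_walsh n (E : {vspace vecF2 n}) v f :
  exists psi : vecF2 n -> vecF2 (\dim E), forall u,
    Xsum v E f u = sgnF2 (dotF2 u v) * walsh (pullback (\dim E) v E f) (psi u).
Proof.
pose GE := [set x : vecF2 n | x \in E].
pose phi (y : vecF2 (\dim E)) := Phi GE (lexrank y).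
have phiD' : forall y z, phi (y + z) = phi y + phi z by exact: phiD.
have phi0 : phi 0 = 0.
  by apply: (@addrI _ (phi 0)); rewrite addr0 -phiD' addr0.
exists (fun u => \row_k dotF2 u (phi (delta_mx 0 k))) => u.
have Hlin : forall y, dotF2 u (phi y) = dotF2 (\row_k dotF2 u (phi (delta_mx 0 k))) y.
  move=> y; rewrite {1}(row_sum_delta y).
  rewrite (big_morph phi phiD' phi0).
  rewrite (big_morph (dotF2 u) (@dotF2D n u) (dotF20 u)).
  apply: eq_bigr => k _; rewrite mxE.
  case: (F2_cases (y 0 k)) => ->.
    by rewrite scale0r phi0 dotF20 mulr0.
  by rewrite scale1r mulr1.
rewrite /Xsum (reindex (fun e => v + e)); last first.
  exists (fun w => w - v) => x _; first by rewrite addrAC subrr add0r.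
  by rewrite addrCA subrr addr0.
rewrite (eq_bigl (fun e => e \in GE)); last first.
  by move=> e; rewrite /inCoset inE addrAC subrr add0r.
have -> : GE = phi @: setT by rewrite phi_img.
rewrite big_imset /=; last by move=> y z _ _; exact: phi_inj.
rewrite /walsh mulr_sumr; apply: eq_big => [y|y _]; first by rewrite in_setT.
rewrite /pullback lexlist_sl -/GE -/(Phi GE _) -/(phi y).
rewrite dotF2D Hlin -sgnF2D; congr sgnF2.
by rewrite addrCA addrA.
Qed.

Lemma sgnF2_0 : sgnF2 0 = 1. Proof. by []. Qed.
Lemma sgnF2_1 : sgnF2 1 = -1. Proof. by []. Qed.

Lemma dot0F2 n (x : vecF2 n) : dotF2 0 x = 0.
Proof. by rewrite /dotF2 big1 // => i _; rewrite mxE mul0r. Qed.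

Lemma dot_delta n (u : vecF2 n) i : dotF2 u (delta_mx 0 i) = u 0 i.
Proof.
rewrite /dotF2 (bigD1 i) //= big1 ?addr0.
  by rewrite mxE !eqxx /= mulr1.
by move=> j Hj; rewrite mxE (negbTE Hj) andbF mulr0.
Qed.

Lemma orth n (u : vecF2 n) :
  \sum_(x : vecF2 n) sgnF2 (dotF2 u x) = if u == 0 then (2 ^ n)%:R else 0 :> int.
Proof.
case: eqP => [->|/eqP Hu].
  rewrite (eq_bigr (fun _ => 1)); last by move=> x _; rewrite dot0F2.
  by rewrite sumr_const card_mx card_Fp // mul1n.
have [i Hi] : exists i, u 0 i != 0.
  apply/existsP; apply: contraR Hu; rewrite negb_exists => /forallP H.
  by apply/eqP/rowP => j; rewrite mxE; move: (H j); rewrite negbK => /eqP.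
have Hui : u 0 i = 1 by case: (F2_cases (u 0 i)) Hi => ->.
set S := \sum_x _.
have HS : S = - S.
  rewrite {1}/S (reindex_inj (addIr (delta_mx 0 i))) /= /S -sumrN.
  by apply: eq_bigr => x _; rewrite dotF2D dot_delta Hui sgnF2D sgnF2_1 mulrN1.
have : S *+ 2 = 0 by rewrite mulr2n {1}HS addNr.
by move/eqP; rewrite mulrn_eq0 /= => /eqP.
Qed.

Lemma addv_eq0 n (u w : vecF2 n) : (u + w == 0) = (u == w).
Proof.
apply/eqP/eqP => [H|->]; last exact: addvv.
by rewrite -[u]addr0 -(addvv w) addrA H add0r.
Qed.

Lemma INV n (F : vecF2 n -> int) (w : vecF2 n) :
  \sum_(x : vecF2 n) (\sum_(u : vecF2 n) F u * sgnF2 (dotF2 u x)) * sgnF2 (dotF2 w x)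
  = (2 ^ n)%:R * F w.
Proof.
under eq_bigr do rewrite mulr_suml.
rewrite exchange_big /=.
rewrite (eq_bigr (fun u => F u * if u == w then (2 ^ n)%:R else 0)); last first.
  move=> u _; rewrite -addv_eq0 -orth mulr_sumr; apply: eq_bigr => x _.
  by rewrite -mulrA -sgnF2D dotF2Dl.
rewrite (bigD1 w) //= eqxx big1 ?addr0; first by rewrite mulrC.
by move=> u /negbTE ->; rewrite mulr0.
Qed.

Lemma pow2_inj (a b : nat) : (2 : int) ^+ a = 2 ^+ b -> a = b.
Proof. by rewrite -!natrX => /eqP; rewrite eqr_nat eqn_exp2l // => /eqP. Qed.

Lemma norm_pow2 k : `|(2 : int) ^+ k| = 2 ^+ k.
Proof. by rewrite ger0_norm // exprn_ge0. Qed.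

Lemma norm_sgn a : `|sgnF2 a| = 1.
Proof. by case: (F2_cases a) => ->. Qed.

Lemma Xabs n (E : {vspace vecF2 n}) v f s :
  plateaued s (pullback (\dim E) v E f) ->
  forall u, Xsum v E f u = 0 \/ `|Xsum v E f u| = 2 ^+ ((\dim E + s)./2).
Proof.
move=> [_ Hpl] u; have [psi Hpsi] := Xsum_walsh E v f.
rewrite Hpsi; move: (Hpl (psi u)); rewrite !inE intz.
case/or3P => /eqP ->; first by left; rewrite mulr0.
- by right; rewrite normrM norm_sgn mul1r norm_pow2.
- by right; rewrite normrM norm_sgn mul1r normrN norm_pow2.
Qed.

Lemma X_nonzero n (E : {vspace vecF2 n}) v f : exists x, Xsum v E f x != 0.
Proof.
pose F u := if inCoset v E u then sgnF2 (f u) else 0.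
have HX : forall x, Xsum v E f x = \sum_u F u * sgnF2 (dotF2 u x).
  move=> x; rewrite /Xsum big_mkcond /=; apply: eq_bigr => u _.
  rewrite /F; case: (inCoset v E u); last by rewrite mul0r.
  by rewrite sgnF2D dotF2C.
have := INV F v; rewrite /F /inCoset subrr mem0v.
under eq_bigr do rewrite -HX.
move=> Hs; apply/existsP; apply: contraT; rewrite negb_exists => /forallP H.
move: Hs; rewrite big1; last by move=> x _; move: (H x); rewrite negbK => /eqP ->; rewrite mul0r.
move/eqP; rewrite eq_sym mulf_eq0.
have -> : ((2 ^ n)%:R == 0 :> int) = false by rewrite pnatr_eq0 expn_eq0.
by case: (F2_cases (f v)) => ->.
Qed.

Lemma Wsum n (E1 E2 : {vspace vecF2 n}) v1 v2 f1 f2 :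
  (forall u, ~~ (inCoset v1 E1 u && inCoset v2 E2 u)) ->
  forall x, \sum_u Wspec v1 v2 E1 E2 f1 f2 u * sgnF2 (dotF2 u x) =
    2 ^+ (n./2 + 1) * Xsum v1 E1 f1 x + 2 ^+ n./2 * Xsum v2 E2 f2 x.
Proof.
move=> Hd x; rewrite /Xsum !mulr_sumr.
rewrite (big_mkcond (inCoset v1 E1)) (big_mkcond (inCoset v2 E2)) -big_split /=.
apply: eq_bigr => u _; rewrite /Wspec !intz.
move: (Hd u); case: (inCoset v1 E1 u); case: (inCoset v2 E2 u) => //= _.
- by rewrite addr0 mulrAC mulrC -sgnF2D dotF2C.
- by rewrite add0r mulrAC mulrC -sgnF2D dotF2C.
- by rewrite addr0 mul0r.
Qed.

Theorem mainTheorem3 (n lam1 lam2 s1 s2 : nat)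
    (E1 E2 : {vspace 'rV['F_2]_n}) (v1 v2 : 'rV['F_2]_n)
    (f1 f2 : 'rV['F_2]_n -> 'F_2) :
  ~~ odd n ->
  \dim E1 = lam1 -> \dim E2 = lam2 ->
  (forall u, ~~ (inCoset v1 E1 u && inCoset v2 E2 u)) ->
  (2 ^ lam1 + 2 ^ lam2 < 2 ^ n)%N ->
  plateaued s1 (pullback lam1 v1 E1 f1) ->
  plateaued s2 (pullback lam2 v2 E2 f2) ->
  totally_disjoint_spectra v1 v2 E1 E2 f1 f2 ->
  ((exists f : 'rV['F_2]_n -> 'F_2, forall u, walsh f u = Wspec v1 v2 E1 E2 f1 f2 u)
   <-> (lam1 + s1 + 2 = n /\ lam2 + s2 = n)%N).
Proof.
move=> Hn HE1 HE2 Hdisj _ Hpl1 Hpl2 Htds; subst lam1 lam2.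
set m := n./2.
have Hnm : n = (m + m)%N.
  by have := odd_double_half n; rewrite (negbTE Hn) add0n -addnn.
have XA1 := Xabs Hpl1; have XA2 := Xabs Hpl2.
have Hev1 : (\dim E1 + s1 = (\dim E1 + s1)./2 + (\dim E1 + s1)./2)%N.
  by have := odd_double_half (\dim E1 + s1); rewrite (negbTE Hpl1.1) add0n -addnn.
have Hev2 : (\dim E2 + s2 = (\dim E2 + s2)./2 + (\dim E2 + s2)./2)%N.
  by have := odd_double_half (\dim E2 + s2); rewrite (negbTE Hpl2.1) add0n -addnn.
set h1 := ((\dim E1 + s1)./2)%N in XA1 Hev1.
set h2 := ((\dim E2 + s2)./2)%N in XA2 Hev2.
set X1 := Xsum v1 E1 f1 in XA1 Htds *.
set X2 := Xsum v2 E2 f2 in XA2 Htds *.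
have HW := Wsum f1 f2 Hdisj; rewrite -/m -/X1 -/X2 in HW.
have n2 : ((2 ^ n)%:R : int) = 2 ^+ n by rewrite natrX.
split.
- move=> [f Hf].
  have HT : forall x, 2 ^+ (m + 1) * X1 x + 2 ^+ m * X2 x = 2 ^+ n * sgnF2 (f x).
    move=> x; rewrite -HW -n2 -(INV (fun y => sgnF2 (f y)) x).
    apply: eq_bigr => u _; rewrite -Hf dotF2C; congr (_ * _).
    by apply: eq_bigr => y _; rewrite sgnF2D dotF2C.
  have [x1 Hx1] := X_nonzero E1 v1 f1; rewrite -/X1 in Hx1.
  have [x2 Hx2] := X_nonzero E2 v2 f2; rewrite -/X2 in Hx2.
  have Hx1' : X2 x1 = 0.
    by have /eqP := (Htds x1).1; rewrite mulf_eq0 (negbTE Hx1) => /eqP.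
  have Hx2' : X1 x2 = 0.
    by have /eqP := (Htds x2).1; rewrite mulf_eq0 (negbTE Hx2) orbF => /eqP.
  have E1' : (m + 1 + h1 = n)%N.
    have := HT x1; rewrite Hx1' mulr0 addr0 => /(congr1 Num.norm).
    rewrite !normrM norm_sgn mulr1 !norm_pow2.
    case: (XA1 x1) => [H|->]; first by move: Hx1; rewrite H eqxx.
    by rewrite -exprD => /pow2_inj.
  have E2' : (m + h2 = n)%N.
    have := HT x2; rewrite Hx2' mulr0 add0r => /(congr1 Num.norm).
    rewrite !normrM norm_sgn mulr1 !norm_pow2.
    case: (XA2 x2) => [H|->]; first by move: Hx2; rewrite H eqxx.
    by rewrite -exprD => /pow2_inj.
  split; lia.
- move=> [H1 H2].
  pose T x := 2 ^+ (m + 1) * X1 x + 2 ^+ m * X2 x.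
  have HT : forall x, `|T x| = 2 ^+ n.
    move=> x; rewrite /T; have [Hp Hs] := Htds x.
    rewrite -/(X1 x) -/(X2 x) in Hp Hs.
    have [Z1|NZ1] := eqVneq (X1 x) 0.
      rewrite Z1 mulr0 add0r normrM norm_pow2.
      case: (XA2 x) => [Z2|->]; first by move: Hs; rewrite Z1 Z2 normr0 addr0 ltxx.
      by rewrite -exprD; congr (_ ^+ _); lia.
    have Z2 : X2 x = 0.
      by move/eqP: Hp; rewrite mulf_eq0 (negbTE NZ1) => /eqP.
    rewrite Z2 mulr0 addr0 normrM norm_pow2.
    case: (XA1 x) => [Z1|->]; first by move: NZ1; rewrite Z1 eqxx.
    by rewrite -exprD; congr (_ ^+ _); lia.
  pose f x : 'F_2 := if 0 <= T x then 0 else 1.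
  have Hf : forall x, 2 ^+ n * sgnF2 (f x) = T x.
    move=> x; rewrite /f; case: ifP => H.
      by rewrite sgnF2_0 mulr1 -(HT x) ger0_norm.
    by rewrite sgnF2_1 mulrN1 -(HT x) ltr0_norm ?opprK // ltNge H.
  exists f => w.
  have Hnz : (2 : int) ^+ n != 0 by rewrite expf_neq0.
  apply: (mulfI Hnz); rewrite -n2 -(INV (Wspec v1 v2 E1 E2 f1 f2)) n2 /walsh mulr_sumr.
  apply: eq_bigr => x _; rewrite HW -/(T x) -Hf -mulrA -sgnF2D.
  by [].
Qed.
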